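(* Let $S$ be a finite semigroup in which every element has a square root (i.e. for every $x\in S$ there is $y\in S$ with $y^2=x$). Then every $x\in S$ has a square root in $\langle x\rangle=\{x,x^2,x^3,\dots\}$. *)

(* Defs.v *)
From mathcomp Require Import all_boot.
Set Implicit Arguments. Unset Strict Implicit. Unset Printing Implicit Defensive.

(* Positive powers in a semigroup (no identity):
   spow op x n = x^(n+1) = x * x * ... * x  (n+1 factors). *)
Fixpoint spow (T : Type) (op : T -> T -> T) (x : T) (n : nat) : T :=
  match n with
  | 0 => x
  | k.+1 => op (spow op x k) x
  end.

Definition in_monogenic (T : Type) (op : T -> T -> T) (x y : T) : Prop :=
  exists n : nat, y = spow op x n.

(* Main.v *)
Require Import Defs.
From mathcomp Require Import all_boot all_fingroup.

Lemma spowD (T : Type) (op : T -> T -> T)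
  (op_assoc : forall a b c : T, op a (op b c) = op (op a b) c) x a b :
  op (spow op x a) (spow op x b) = spow op x (a + b).+1.
Proof.
elim: b => [|b IH] /=; first by rewrite addn0.
by rewrite op_assoc IH addnS.
Qed.

Theorem theorem4p8 (T : finType) (op : T -> T -> T)
  (op_assoc : forall a b c : T, op a (op b c) = op (op a b) c)
  (has_sqrt : forall x : T, exists y : T, op y y = x) :
  forall x : T, exists y : T, in_monogenic op x y /\ op y y = x.
Proof.
move=> x.
pose f := fun y : T => op y y.
have ex : forall z, exists y : T, op y y == z.
  by move=> z; have [y Hy] := has_sqrt z; exists y; apply/eqP.
pose g := fun z : T => xchoose (ex z).
have fg : cancel g f by move=> z; apply/eqP; exact: (xchooseP (ex z)).
have ginj : injective g := can_inj fg.
have [g' gg' g'g] := injF_bij ginj.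
have finj : injective f.
  move=> a b Hab.
  have e : forall c, f c = g' c by move=> c; rewrite -{1}(g'g c) fg.
  by rewrite -(g'g a) -(g'g b) -!e Hab.
pose p := perm finj.
have ord := order_gt0 p.
have Hk : iter #[p]%g f x = x.
  by rewrite -[RHS](perm1 x) -(expg_order p) permX; apply: eq_iter => z; rewrite permE.
have mono : forall n, in_monogenic op x (iter n f x).
  elim=> [|n [k Hk']]; first by exists 0.
  by exists (k + k).+1; rewrite iterS Hk' /f spowD.
exists (iter #[p]%g.-1 f x); split; first exact: mono.
by rewrite -[RHS]Hk -(prednK ord) iterS.
Qed.
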